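(* For all automata $A$ and $B$: $A\le_F B$ if and only if there exists an automaton $C$ with $A\le_H C$ and $C\le_R B$.
   Context: An automaton $A$ consists of a set $\mathrm{states}(A)$ of states, a nonempty set $\mathrm{start}(A)\subseteq\mathrm{states}(A)$ of start states, a set $\mathrm{acts}(A)$ of actions containing a distinguished internal action $\tau$, and a set $\mathrm{steps}(A)\subseteq\mathrm{states}(A)\times\mathrm{acts}(A)\times\mathrm{states}(A)$ of steps; write $s\xrightarrow{a}_A t$ for $(s,a,t)\in\mathrm{steps}(A)$. For a relation $R$ write $R[s]=\{u\mid (s,u)\in R\}$. A step refinement from $A$ to $B$ is a partial function $r:\mathrm{states}(A)\rightharpoonup\mathrm{states}(B)$ such that (1) if $s\in\mathrm{start}(A)$ then $s\in\mathrm{dom}(r)$ and $r(s)\in\mathrm{start}(B)$; (2) if $s\xrightarrow{a}_A t$ and $s\in\mathrm{dom}(r)$ then $t\in\mathrm{dom}(r)$ and either $r(s)=r(t)$ and $a=\tau$, or $r(s)\xrightarrow{a}_B r(t)$. Write $A\le_R B$ if one exists. A normed forward simulation from $A$ to $B$ is a pair $(f,n)$ where $f\subseteq\mathrm{states}(A)\times\mathrm{states}(B)$ and $n:\mathrm{steps}(A)\times\mathrm{states}(B)\to S$ for some set $S$ with a well-founded strict order $<$, such that: (1) if $s\in\mathrm{start}(A)$ then $f[s]\cap\mathrm{start}(B)\neq\emptyset$; (2) if $s\xrightarrow{a}_A t$ and $u\in f[s]$ then (a) $u\in f[t]$ and $a=\tau$, or (b) there is $v\in f[t]$ with $u\xrightarrow{a}_B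 v$, or (c) there is $v\in f[s]$ with $u\xrightarrow{\tau}_B v$ and $n(s\xrightarrow{a}t,v)<n(s\xrightarrow{a}t,u)$. Write $A\le_F B$ if one exists. A normed history relation from $A$ to $B$ is a pair $(r,n)$ such that $r$ is a step refinement from $B$ to $A$ and $(r^{-1},n)$ is a normed forward simulation from $A$ to $B$. Write $A\le_H B$ if one exists. *)

(* Defs.v *)
From Stdlib Require Import Relations Wellfounded.


Record Automaton (Act : Type) (tau : Act) : Type := {
  states : Type;
  start : states -> Prop;
  start_nonempty : exists s, start s;
  acts : Act -> Prop;
  tau_in_acts : acts tau;
  steps : states -> Act -> states -> Prop;
  steps_acts : forall s a t, steps s a t -> acts a
}.

Arguments Automaton : clear implicits.
Arguments states {Act tau} _.
Arguments start {Act tau} _ _.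
Arguments acts {Act tau} _ _.
Arguments steps {Act tau} _ _ _ _.

Section Defs.
Variables (Act : Type) (tau : Act).

Definition step_refinement (A B : Automaton Act tau)
    (r : states A -> option (states B)) : Prop :=
  (forall s, start A s -> exists u, r s = Some u /\ start B u) /\
  (forall s a t u, steps A s a t -> r s = Some u ->
     exists v, r t = Some v /\ ((u = v /\ a = tau) \/ steps B u a v)).

Definition refines_R (A B : Automaton Act tau) : Prop :=
  exists r, step_refinement A B r.

Definition wf_strict_order (S : Type) (lt : S -> S -> Prop) : Prop :=
  (forall x, ~ lt x x) /\ transitive S lt /\ well_founded lt.

(* Normed forward simulation; the norm n is given on the step s -a-> t
   (as its three components) and a state of B. *)
Definition normed_forward_simulation (A B : Automaton Act tau)
    (f : states A -> states B -> Prop) (S : Type) (lt : S -> S -> Prop)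
    (n : states A -> Act -> states A -> states B -> S) : Prop :=
  wf_strict_order S lt /\
  (forall s, start A s -> exists u, f s u /\ start B u) /\
  (forall s a t u, steps A s a t -> f s u ->
     (f t u /\ a = tau) \/
     (exists v, f t v /\ steps B u a v) \/
     (exists v, f s v /\ steps B u tau v /\ lt (n s a t v) (n s a t u))).

Definition refines_F (A B : Automaton Act tau) : Prop :=
  exists f (S : Type) (lt : S -> S -> Prop) n,
    normed_forward_simulation A B f S lt n.

Definition inv_rel (A B : Automaton Act tau) (r : states B -> option (states A))
    : states A -> states B -> Prop :=
  fun s u => r u = Some s.

Definition refines_H (A B : Automaton Act tau) : Prop :=
  exists (r : states B -> option (states A)) (S : Type) (lt : S -> S -> Prop) n,
    step_refinement B A r /\ normed_forward_simulation A B (inv_rel A B r) S lt n.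

End Defs.

Arguments step_refinement {Act tau} A B r.
Arguments refines_R {Act tau} A B.
Arguments normed_forward_simulation {Act tau} A B f S lt n.
Arguments refines_F {Act tau} A B.
Arguments inv_rel {Act tau} A B r _ _.
Arguments refines_H {Act tau} A B.

(* Main.v *)
Require Import Defs.
From Stdlib Require Import Relations Wellfounded Classical ClassicalEpsilon Arith Lia.

Lemma least_ex (P : nat -> Prop) : (exists k, P k) -> exists k, P k /\ forall j, P j -> k <= j.
Proof.
  intros [k Hk]. induction k as [k IH] using (well_founded_induction lt_wf).
  destruct (classic (exists j, j < k /\ P j)) as [[j [Hj Pj]]|Hno].
  - exact (IH j Hj Pj).
  - exists k; split; auto. intros j Pj. destruct (le_lt_dec k j); auto.
    exfalso; apply Hno; eauto.
Qed.

Section Back.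
Variables (Act : Type) (tau : Act) (A B C : Automaton Act tau).
Variables (r : states C -> option (states A)) (g : states C -> option (states B)).
Variables (S : Type) (lt : S -> S -> Prop) (n : states A -> Act -> states A -> states C -> S).
Hypothesis Hr : step_refinement C A r.
Hypothesis Hg : step_refinement C B g.
Hypothesis Hsim : normed_forward_simulation A C (inv_rel A C r) S lt n.

Definition fr (s : states A) (w : states B) : Prop := exists u, r u = Some s /\ g u = Some w.

Fixpoint Good (s : states A) (a : Act) (t : states A) (k : nat) (w : states B) : Prop :=
  match k with
  | 0 => (fr t w /\ a = tau) \/ (exists v, fr t v /\ steps B w a v)
  | Datatypes.S k => exists v, fr s v /\ steps B w tau v /\ Good s a t k v
  end.

Lemma allgood s a t : steps A s a t -> forall x u w, r u = Some s -> n s a t u = x ->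
  g u = Some w -> exists k, Good s a t k w.
Proof.
  intros Hst x. destruct Hsim as [[_ [_ Hwf]] [_ Hstep]].
  induction x as [x IH] using (well_founded_induction Hwf).
  intros u w Hu Hn Hgu.
  destruct (Hstep s a t u Hst Hu) as [[Ha Hat]|[[v [Hv Hcv]]|[v [Hv [Hcv Hlt]]]]].
  - exists 0; left; split; auto. exists u; auto.
  - destruct Hg as [_ Hgs]. destruct (Hgs u a v w Hcv Hgu) as [v' [Hgv [[-> Ha]|Hb]]].
    + exists 0; left; split; auto. exists v; auto.
    + exists 0; right; exists v'; split; auto. exists v; auto.
  - destruct Hg as [_ Hgs]. destruct (Hgs u tau v w Hcv Hgu) as [v' [Hgv [[-> _]|Hb]]].
    + subst x. eapply IH; eauto.
    + subst x. destruct (IH _ Hlt v v' Hv eq_refl Hgv) as [k Hk].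
      exists (Datatypes.S k). exists v'; split; [exists v; auto|split; auto].
Qed.

Definition N (s : states A) (a : Act) (t : states A) (w : states B) : nat :=
  epsilon (inhabits 0) (fun k => Good s a t k w /\ forall j, Good s a t j w -> k <= j).

Lemma N_spec s a t w : (exists k, Good s a t k w) ->
  Good s a t (N s a t w) w /\ forall j, Good s a t j w -> N s a t w <= j.
Proof.
  intro H. unfold N. apply epsilon_spec. apply least_ex; auto.
Qed.

Lemma back : refines_F A B.
Proof.
  exists fr, nat, Peano.lt, N. split; [|split].
  - split; [exact Nat.lt_irrefl|split; [exact Nat.lt_trans|exact lt_wf]].
  - intros s Hs. destruct Hsim as [_ [Hst _]].
    destruct (Hst s Hs) as [u [Hu Hsu]].
    destruct Hg as [Hgs _]. destruct (Hgs u Hsu) as [w [Hw Hsw]].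
    exists w; split; auto. exists u; auto.
  - intros s a t w Hst [u [Hu Hgu]].
    destruct (N_spec s a t w (allgood s a t Hst _ u w Hu eq_refl Hgu)) as [HG _].
    remember (N s a t w) as k eqn:Hk. destruct k as [|k].
    + destruct HG as [H|H]; [left|right; left]; auto.
    + destruct HG as [v [Hfv [Hwv Hgv]]]. right; right. exists v; split; auto; split; auto.
      destruct (N_spec s a t v (ex_intro _ k Hgv)) as [_ Hm]. specialize (Hm k Hgv). lia.
Qed.
End Back.

Section Forth.
Variables (Act : Type) (tau : Act) (A B : Automaton Act tau).
Variables (f : states A -> states B -> Prop) (S : Type) (lt : S -> S -> Prop)
  (n : states A -> Act -> states A -> states B -> S).
Hypothesis Hf : normed_forward_simulation A B f S lt n.

Definition CS := {p : states A * states B | f (fst p) (snd p)}.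

Definition Cstep (p : CS) (a : Act) (q : CS) : Prop :=
  let s := fst (proj1_sig p) in let u := snd (proj1_sig p) in
  let t := fst (proj1_sig q) in let v := snd (proj1_sig q) in
  (steps A s a t /\ ((u = v /\ a = tau) \/ steps B u a v)) \/
  (s = t /\ a = tau /\ steps B u tau v).

Definition Cstart (p : CS) : Prop := start A (fst (proj1_sig p)) /\ start B (snd (proj1_sig p)).

Lemma Cstart_ne : exists p, Cstart p.
Proof.
  destruct (start_nonempty _ _ A) as [s Hs]. destruct Hf as [_ [Hst _]].
  destruct (Hst s Hs) as [u [Hfu Hu]].
  exists (exist _ (s, u) Hfu). split; auto.
Qed.

Lemma Cacts : forall p a q, Cstep p a q -> (fun a => acts A a \/ acts B a) a.
Proof.
  intros p a q [[H _]|[_ [-> _]]].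
  - left; eapply steps_acts; eauto.
  - left; apply tau_in_acts.
Qed.

Definition Caut : Automaton Act tau :=
  {| states := CS; start := Cstart; start_nonempty := Cstart_ne;
     acts := fun a => acts A a \/ acts B a; tau_in_acts := or_introl (tau_in_acts _ _ A);
     steps := Cstep; steps_acts := Cacts |}.

Lemma forth : exists C, refines_H A C /\ refines_R C B.
Proof.
  exists Caut. split.
  - exists (fun p : CS => Some (fst (proj1_sig p))), S, lt,
      (fun s a t (q : CS) => n s a t (snd (proj1_sig q))).
    split; [split|].
    + intros p [Hs _]. eauto.
    + intros [[s u] Hp] a [[t v] Hq] w Hstep Hw. injection Hw as <-.
      exists t; split; auto. destruct Hstep as [[H _]|[H [Ha _]]]; simpl in *; subst; auto.
    + destruct Hf as [Hwf [Hst Hstep]]. split; auto. split.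
      * intros s Hs. destruct (Hst s Hs) as [u [Hfu Hu]].
        exists (exist _ (s, u) Hfu). split; [reflexivity|split; auto].
      * intros s a t [[s' u] Hp] Hst' Hi. unfold inv_rel in Hi; simpl in Hi.
        injection Hi as ->. simpl in Hp.
        destruct (Hstep s a t u Hst' Hp) as [[Ht Ha]|[[v [Hv Hb]]|[v [Hv [Hb Hlt]]]]].
        -- right; left. exists (exist _ (t, u) Ht). split; [reflexivity|].
           left; simpl; split; auto.
        -- right; left. exists (exist _ (t, v) Hv). split; [reflexivity|].
           left; simpl; split; auto.
        -- right; right. exists (exist _ (s, v) Hv). split; [reflexivity|]. split.
           ++ right; simpl; auto.
           ++ simpl; auto.
  - exists (fun p : CS => Some (snd (proj1_sig p))). split.
    + intros p [_ Hs]. eauto.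
    + intros [[s u] Hp] a [[t v] Hq] w Hstep Hw. injection Hw as <-.
      exists v; split; auto. destruct Hstep as [[_ H]|[_ [-> H]]]; simpl in *; auto.
Qed.
End Forth.

Theorem mainTheorem16 (Act : Type) (tau : Act) (A B : Automaton Act tau) :
  refines_F A B <-> exists C : Automaton Act tau, refines_H A C /\ refines_R C B.
Proof.
  split.
  - intros [f [S [lt [n Hf]]]]. eapply forth; eauto.
  - intros [C [[r [S [lt [n [Hr Hsim]]]]] [g Hg]]]. eapply back; eauto.
Qed.
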